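(* Let $R$ be Rado's poset. Then $\bigcup AM_m(R)$ is bqo for every integer $m$, and $R$ embeds into $AM(R)$.
   Context: Rado's poset $R$ has underlying set $V=\{(m,n)\in\mathbb{N}^2: m<n\}$ with $(m,n)\leq_R(m',n')$ iff either ($m=m'$ and $n\leq n'$) or $n<m'$. $AM(R)$ is the set of maximal antichains of $R$ ordered by domination ($X\leq Y$ iff each $x\in X$ is below some $y\in Y$); $AM_m(R)$ is the set of maximal antichains with exactly $m$ elements, and $\bigcup AM_m(R)$ is the union of these antichains with the order induced by $R$. An embedding is a map $e$ with $x\leq y\iff e(x)\leq e(y)$. Barriers and bqo: finite subsets of $\mathbb{N}$ are identified with their increasing enumerations; $s\triangleleft t$ means there is a finite $r\subseteq\mathbb{N}$ with $s$ a proper initial segment of $r$ and $t$ equal to $r$ minus its least element. A barrier is an infinite set $B$ of finite subsets of $\mathbb{N}$, no member a proper subset of another, such that every infinite $X\subseteq\bigcup B$ has a nonempty initial segment in $B$; its order type is that of $B$ under the lexicographic order. A map $f$ from a barrier into a quasi-order $Q$ is good if $f(s)\leq f(t)$ for some $s\triangleleft t$; $Q$ is $\alpha$-bqo if every map from a barrier of order type at most $\alpha$ into $Q$ is good, and bqo if it is $\alpha$-bqo for all countable $\alpha$. *)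

(* Defs.v *)
From mathcomp Require Import all_boot.
Set Implicit Arguments. Unset Strict Implicit. Unset Printing Implicit Defensive.

Definition radoV (p : nat * nat) : Prop := p.1 < p.2.

Definition radoLe (p q : nat * nat) : Prop :=
  (p.1 = q.1 /\ p.2 <= q.2) \/ p.2 < q.1.

Definition pset := nat * nat -> Prop.

Definition antichain (X : pset) : Prop :=
  (forall x, X x -> radoV x) /\
  (forall x y, X x -> X y -> x <> y -> ~ radoLe x y).

Definition max_antichain (X : pset) : Prop :=
  antichain X /\
  (forall Y : pset, antichain Y -> (forall x, X x -> Y x) -> forall y, Y y -> X y).

Definition has_card (X : pset) (m : nat) : Prop :=
  exists l : seq (nat * nat), uniq l /\ size l = m /\ (forall x, X x <-> x \in l).

Definition dominated (X Y : pset) : Prop :=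
  forall x, X x -> exists y, Y y /\ radoLe x y.

Definition UAM (m : nat) : pset :=
  fun x => exists X, max_antichain X /\ has_card X m /\ X x.

(* finite subsets of N are represented by their increasing enumerations *)
Definition fin_nat_set (s : seq nat) : Prop := sorted ltn s.

(* s <| t : there is a finite r with s a proper initial segment of r and
   t = r minus its least element *)
Definition tri (s t : seq nat) : Prop :=
  exists r : seq nat, fin_nat_set r /\
    (exists k, k < size r /\ s = take k r) /\ t = behead r.

Definition infinite_family (B : seq nat -> Prop) : Prop :=
  forall l : seq (seq nat), exists s, B s /\ s \notin l.

Definition infinite_nat_set (X : nat -> Prop) : Prop :=
  forall n, exists x, n <= x /\ X x.

Definition nonempty_initial_segment (s : seq nat) (X : nat -> Prop) : Prop :=
  s <> [::] /\ fin_nat_set s /\ (forall x, x \in s -> X x) /\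
  (forall x, X x -> x <= last 0 s -> x \in s).

Definition barrier (B : seq nat -> Prop) : Prop :=
  (forall s, B s -> fin_nat_set s) /\
  infinite_family B /\
  (forall s t, B s -> B t -> {subset s <= t} -> s = t) /\
  (forall X : nat -> Prop, infinite_nat_set X ->
     (forall x, X x -> exists s, B s /\ x \in s) ->
     exists s, B s /\ nonempty_initial_segment s X).

(* a map f : B -> Q (Q given as a carrier predicate with quasi-order le) is good *)
Definition good {T : Type} (le : T -> T -> Prop) (B : seq nat -> Prop)
  (f : seq nat -> T) : Prop :=
  exists s t, B s /\ B t /\ tri s t /\ le (f s) (f t).

Definition bqo {T : Type} (le : T -> T -> Prop) (Q : T -> Prop) : Prop :=
  forall B, barrier B -> forall f : seq nat -> T,
    (forall s, B s -> Q (f s)) -> good le B f.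

(* Main.v *)
Require Import Defs.
From mathcomp Require Import all_boot zify.
From Stdlib Require Import Classical ClassicalEpsilon.
Set Implicit Arguments. Unset Strict Implicit. Unset Printing Implicit Defensive.

Definition emb (x : nat * nat) : pset :=
  fun z => (z.1 <= x.1 /\ z.2 = x.1.+1) \/ z = (x.1.+1, x.2.+2).

Lemma emb_max x : radoV x -> max_antichain (emb x).
Proof.
case: x => p q; rewrite /radoV /= => hpq.
have hA : antichain (emb (p, q)).
  split.
    move=> [a b]; rewrite /emb /radoV /= => -[[h1 ->]|[-> ->]]; lia.
  move=> [a b] [c d]; rewrite /emb /radoLe /= => ha hc hne.
  case: ha => [[h1 h2]|[h1 h2]]; case: hc => [[h3 h4]|[h3 h4]]; subst.
  - move=> [[e _]|]; [by apply: hne; rewrite e|lia].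
  - lia.
  - lia.
  - by [].
split=> // Y [hYV hYa] hXY [c d] hy.
rewrite /emb /=.
have hv := hYV _ hy; rewrite /radoV /= in hv.
case: (leqP c p) => hc.
  have hz : Y (c, p.+1) by apply: hXY; rewrite /emb /=; left; split.
  case: (eqVneq d p.+1) => hd; first by left; split.
  exfalso.
  case: (leqP d p.+1) => hd2.
  - apply: (hYa _ _ hy hz); first by move/(f_equal snd) => /= /eqP; rewrite (negbTE hd).
    by rewrite /radoLe /=; left.
  - apply: (hYa _ _ hz hy); first by move/(f_equal snd) => /= /eqP; rewrite eq_sym (negbTE hd).
    by rewrite /radoLe /=; left; split=> //; lia.
case: (eqVneq c p.+1) => hc2.
  subst c.
  have hz : Y (p.+1, q.+2) by apply: hXY; rewrite /emb /=; right.
  case: (eqVneq d q.+2) => hd; first by right; rewrite hd.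
  exfalso.
  case: (leqP d q.+2) => hd2.
  - apply: (hYa _ _ hy hz); first by move/(f_equal snd) => /= /eqP; rewrite (negbTE hd).
    by rewrite /radoLe /=; left.
  - apply: (hYa _ _ hz hy); first by move/(f_equal snd) => /= /eqP; rewrite eq_sym (negbTE hd).
    by rewrite /radoLe /=; left; split=> //; lia.
exfalso.
have hz : Y (0, p.+1) by apply: hXY; rewrite /emb /=; left; split.
apply: (hYa _ _ hz hy); first by move/(f_equal fst) => /=; lia.
rewrite /radoLe /=; right; lia.
Qed.

Lemma emb_dom x y : radoV x -> radoV y -> (radoLe x y <-> dominated (emb x) (emb y)).
Proof.
case: x => p q; case: y => p' q'; rewrite /radoV /radoLe /dominated /emb /= => h1 h2.
split.
  move=> [[e hq]|hlt].
    subst p'. move=> [a b] /= [[ha hb]|hz].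
      exists (a, b); split; [left; split=> //| left; split=> //].
    case: hz => -> ->; exists (p.+1, q'.+2); split; first by right.
    by left; split=> //=; lia.
  move=> [a b] /= [[ha hb]|hz].
    exists (p'.+1, q'.+2); split; first by right.
    by right => /=; lia.
  case: hz => -> ->; exists (p.+1, p'.+1); split; first by left; split=> //=; lia.
  by left; split=> //=; lia.
move=> hd.
have [[a b] [hw hle]] := hd (p.+1, q.+2) (or_intror erefl).
case: hw => /= [[ha hb]|hw].
  subst b; case: hle => /= [[e1 e2]|h]; right; lia.
case: hw => -> -> in hle; case: hle => /= [[e1 e2]|h]; [left; split; lia | right; lia].
Qed.
Lemma uam_bound m x : UAM m x -> x.1 < m.
Proof.
move=> [X [[[hV hA] hmax] [[l [hu [hs hl]]] hx]]].
case: x hx => c d hx /=.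
have hcd : c < d by exact: (hV _ hx).
rewrite ltnNge; apply/negP => hcm.
set F := map fst l.
have huF : uniq F.
  rewrite map_inj_in_uniq // => -[a b] [a' b'] h1 h2 /= e; subst a'.
  case: (eqVneq (a,b) (a,b')) => // /eqP hne; exfalso.
  have Xab := (hl _).2 h1; have Xab' := (hl _).2 h2.
  case: (leqP b b') => hb.
  - by apply: (hA _ _ Xab Xab' hne); left.
  - apply: (hA _ _ Xab' Xab (nesym hne)); left; split=> //=; lia.
have hcF : c \in F by apply: (map_f fst ((hl _).1 hx)).
have : ~~ all (fun a => a \in F) (iota 0 c).
  apply/negP => hall.
  have : size (iota 0 c.+1) <= size F.
    apply: uniq_leq_size; first exact: iota_uniq.
    move=> a; rewrite mem_iota add0n ltnS => /andP [_]; rewrite leq_eqVlt; case/orP => [/eqP -> //|ha].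
    by apply: (allP hall); rewrite mem_iota.
  rewrite size_iota size_map hs; lia.
case/allPn => a; rewrite mem_iota add0n => /andP [_ hac] haF.
have hfar : forall e f, X (e,f) -> [/\ a < f, e <= d & e != a].
  move=> e f hef.
  have heF : e \in F by apply: (map_f fst ((hl _).1 hef)).
  have hea : e != a by apply/eqP => E; rewrite -E heF in haF.
  case: (eqVneq (e,f) (c,d)) => [[-> ->]|/eqP hne]; first by split=> //; lia.
  have h1 : ~ radoLe (e,f) (c,d) := hA _ _ hef hx hne.
  have h2 : ~ radoLe (c,d) (e,f) := hA _ _ hx hef (nesym hne).
  rewrite /radoLe /= in h1 h2.
  split=> //.
  - case: (ltnP f c) => h; [by exfalso; apply: h1; right|lia].
  - case: (ltnP d e) => h; [by exfalso; apply: h2; right|lia].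
pose Y := fun z => X z \/ z = (a, d).
have hY : antichain Y.
  split.
    move=> z [hz|->]; [exact: hV|rewrite /radoV /=; lia].
  move=> [e f] [e' f'] [h1|h1] [h2|h2] hne; rewrite /radoLe /=.
  - exact: (hA _ _ h1 h2 hne).
  - case: h2 => -> ->; have [? ? /eqP ?] := hfar _ _ h1; lia.
  - case: h1 => -> ->; have [? ? /eqP ?] := hfar _ _ h2; lia.
  - by exfalso; apply: hne; rewrite h1 h2.
have Xad : X (a,d) by apply: (hmax Y hY (fun z h => or_introl h)); right.
by move: haF; rewrite (map_f fst ((hl _).1 Xad)).
Qed.
Definition sub (A B : nat -> Prop) := forall x, A x -> B x.
Notation inf := infinite_nat_set.
Notation IS := nonempty_initial_segment.

Lemma in_cons_r (x y : nat) s : y \in s -> y \in x :: s.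
Proof. by rewrite inE => ->; rewrite orbT. Qed.

Lemma path_ltnE a s : path ltn a s = all (ltn a) s && sorted ltn s.
Proof. exact: (path_sortedE ltn_trans). Qed.

Lemma path_last_max a s x : path ltn a s -> x \in a :: s -> x <= last a s.
Proof.
elim: s a x => [|b s IH] a x /=; first by rewrite inE => _ /eqP ->.
move=> /andP [hab hp]; rewrite inE => /orP [/eqP ->|hx].
  have := IH b b hp (mem_head _ _); lia.
exact: IH hp hx.
Qed.

Lemma last_max s x : sorted ltn s -> x \in s -> x <= last 0 s.
Proof. case: s => [//|a s] /= hp hx; exact: path_last_max hp hx. Qed.

Lemma last_in s : s <> [::] -> last 0 s \in s.
Proof. case: s => [//|a s] _ /=; exact: mem_last. Qed.

Lemma min_ex (P : nat -> Prop) : (exists n, P n) -> exists n, P n /\ forall m, P m -> n <= m.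
Proof.
move=> [n hn]; apply: NNPP => H.
suff : forall k, forall j, j <= k -> ~ P j by move/(_ n n (leqnn n)).
elim=> [|k IH] j hj hPj.
  apply: H; exists j; split=> // m _; move: hj; rewrite leqn0 => /eqP ->; done.
case: (leqP j k) => hjk; first exact: IH hjk hPj.
apply: H; exists j; split=> // m hm; case: (leqP j m) => // hmj.
exfalso; apply: (IH m _ hm); lia.
Qed.

Lemma dc (S : Type) (I : S -> Prop) (R : S -> S -> Prop) x0 :
  I x0 -> (forall x, I x -> exists y, I y /\ R x y) ->
  exists g : nat -> S, g 0 = x0 /\ forall k, I (g k) /\ R (g k) (g k.+1).
Proof.
move=> h0 H.
have step : forall x : {x | I x}, {y : {y | I y} | R (sval x) (sval y)}.
  move=> [x hx]; have [y [hy hr]] := constructive_indefinite_description _ (H x hx).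
  by exists (exist _ y hy).
pose f := fun k => iter k (fun x => sval (step x)) (exist _ x0 h0).
exists (fun k => sval (f k)); split=> // k; split; first exact: (svalP (f k)).
exact: (svalP (step (f k))).
Qed.

Lemma bound_ex (s : seq nat) : exists b, forall z, z \in s -> z < b.
Proof.
elim: s => [|a s [b hb]]; first by exists 0.
exists (maxn a.+1 b) => z; rewrite inE => /orP [/eqP ->|/hb]; lia.
Qed.

Fixpoint subs (l : seq nat) : seq (seq nat) :=
  if l is x :: l' then subs l' ++ map (cons x) (subs l') else [:: [::]].

Lemma nil_subs l : [::] \in subs l.
Proof. elim: l => [|x l IH] //=; by rewrite mem_cat IH. Qed.

Lemma subs_iota n a s : sorted ltn s -> (forall x, x \in s -> a <= x < a + n) ->
  s \in subs (iota a n).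
Proof.
elim: n a s => [|n IH] a s hs hb.
  case: s hs hb => [|x s] // _ /(_ x (mem_head _ _)); lia.
rewrite /= mem_cat; case: s hs hb => [|x s] hs hb; first by rewrite nil_subs.
move: (hs); rewrite /= path_ltnE => /andP [hall hss].
case: (eqVneq x a) => hxa.
  apply/orP; right; rewrite hxa; apply: map_f; apply: IH => // y hy.
  have := hb y (in_cons_r _ hy); have : x < y := allP hall y hy; lia.
apply/orP; left; apply: IH => // y; rewrite inE => /orP [/eqP ->|hy].
  have := hb x (mem_head _ _); move: hxa => /eqP; lia.
have := hb y (in_cons_r _ hy); have : x < y := allP hall y hy; have := hb x (mem_head _ _); lia.
Qed.

Lemma sorted_rcons_inv s z : sorted ltn (rcons s z) -> sorted ltn s /\ forall x, x \in s -> x < z.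
Proof.
case: s => [|a s] //= ; rewrite rcons_path => /andP [hp hl]; split=> // x hx.
have := path_last_max hp hx; lia.
Qed.

Lemma sorted_rcons s z : sorted ltn s -> (forall x, x \in s -> x < z) -> sorted ltn (rcons s z).
Proof.
case: s => [|a s] //= hp hb; rewrite rcons_path hp /=; apply: hb; exact: mem_last.
Qed.

Lemma prefix_take r s : sorted ltn r -> sorted ltn s -> {subset s <= r} ->
  (forall x, x \in r -> (exists z, z \in s /\ x <= z) -> x \in s) -> s = take (size s) r.
Proof.
elim: r s => [|a r IH] s hr hs hsub hdown.
  by case: s hs hsub hdown => [|x s] // _ /(_ x (mem_head _ _)).
case: s hs hsub hdown => [//|b s] hs hsub hdown.
move: (hr); rewrite /= path_ltnE => /andP [hra hrs].
move: (hs); rewrite /= path_ltnE => /andP [hsb hss].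
have ha : a \in b :: s by apply: hdown; [exact: mem_head | exists b; split; [exact: mem_head|]; 
  move: (hsub b (mem_head _ _)); rewrite inE => /orP [/eqP ->//|/(allP hra) /=]; lia].
have hab : a = b.
  move: ha; rewrite inE => /orP [/eqP //|/(allP hsb) /= h1].
  move: (hsub b (mem_head _ _)); rewrite inE => /orP [/eqP E|/(allP hra) /= h2]; lia.
subst b; rewrite /= -IH //.
- move=> x hx; move: (hsub x (in_cons_r _ hx)); rewrite inE => /orP [/eqP E|//].
  by move: (allP hsb x hx); rewrite E /= ltnn.
- move=> x hx [z [hz hxz]].
  have : x \in a :: s by apply: hdown; [exact: in_cons_r | exists z; split=> //; exact: in_cons_r].
  rewrite inE => /orP [/eqP E|//]; by move: (allP hra x hx); rewrite E /= ltnn.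
Qed.

Section GP.
Variable P : seq nat -> Prop.

Definition Phi (Y : nat -> Prop) := exists s, P s /\ IS s Y.
Definition above (s : seq nat) x := forall z, z \in s -> z < x.
Definition U (s : seq nat) (Y : nat -> Prop) := fun x => x \in s \/ Y x.
Definition acc s M := forall Y, inf Y -> sub Y M -> (forall y, Y y -> above s y) -> Phi (U s Y).
Definition rej s M := forall N, inf N -> sub N M -> ~ acc s N.
Definition dec s M := acc s M \/ rej s M.

Lemma IS_ext s Y Y' : (forall x, Y x <-> Y' x) -> IS s Y -> IS s Y'.
Proof.
move=> e [h1 [h2 [h3 h4]]]; split=> //; split=> //; split.
  by move=> x /h3 /e.
by move=> x /e; apply: h4.
Qed.

Lemma Phi_ext Y Y' : (forall x, Y x <-> Y' x) -> Phi Y -> Phi Y'.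
Proof. move=> e [s [hP hs]]; exists s; split=> //; exact: IS_ext hs. Qed.

Lemma acc_sub s M N : acc s M -> sub N M -> acc s N.
Proof. move=> h hNM Y hY hYN hab; apply: h => //; move=> x hx; apply: hNM; exact: hYN. Qed.

Lemma rej_sub s M N : rej s M -> sub N M -> rej s N.
Proof. move=> h hNM N' h1 h2; apply: h => //; move=> x hx; apply: hNM; exact: h2. Qed.

Lemma dec_sub s M N : dec s M -> sub N M -> dec s N.
Proof. move=> [h|h] hs; [left; exact: acc_sub h hs|right; exact: rej_sub h hs]. Qed.

Lemma dec_ex s M : inf M -> exists N, inf N /\ sub N M /\ dec s N.
Proof.
move=> hM; case: (classic (rej s M)) => h.
  by exists M; split=> //; split=> //; right.
apply: NNPP => H; apply: h => N hN hNM hacc; apply: H; exists N; split=> //; split=> //; by left.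
Qed.

Lemma dec_list (L : seq (seq nat)) M : inf M -> exists N, inf N /\ sub N M /\ forall s, s \in L -> dec s N.
Proof.
elim: L M => [|s L IH] M hM; first by exists M; split=> //; split=> //.
have [N1 [h1 [h2 h3]]] := IH M hM.
have [N2 [h4 [h5 h6]]] := dec_ex s h1.
exists N2; split=> //; split; first by move=> x hx; apply: h2; apply: h5.
move=> t; rewrite inE => /orP [/eqP ->//|ht]; apply: dec_sub (h3 t ht) h5.
Qed.

Lemma inf_above s N : inf N -> inf (fun x => N x /\ above s x).
Proof.
move=> hN n; have [b hb] := bound_ex s.
have [x [hx hNx]] := hN (maxn n b); exists x; split; first lia.
split=> // z /hb; lia.
Qed.

Lemma dec_tail s M M' : sub (fun x => M x /\ above s x) M' -> dec s M' -> dec s M.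
Proof.
move=> hsub [h|h].
  left => Y hY hYM hab; apply: h => // x hx; apply: hsub; split; [exact: hYM|exact: hab].
right => N hN hNM hacc.
apply: (h (fun x => N x /\ above s x)).
- exact: inf_above.
- by move=> x [h1 h2]; apply: hsub; split=> //; apply: hNM.
- by apply: acc_sub hacc _ => x [].
Qed.


Lemma diag1 M : inf M -> exists N, inf N /\ sub N M /\
  forall s, sorted ltn s -> (forall x, x \in s -> N x) -> dec s N.
Proof.
move=> hM.
have [M0 [hM0 [hM0M hd0]]] := dec_ex [::] hM.
have [m0 [_ hm0]] := hM0 0.
pose I := fun p : nat * (nat -> Prop) => inf p.2 /\ p.2 p.1 /\ sub p.2 M0.
pose R := fun p q : nat * (nat -> Prop) => sub q.2 p.2 /\ p.1 < q.1 /\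
   forall s, s \in subs (iota 0 p.1.+1) -> dec s q.2.
have [g [g0 hg]] : exists g, g 0 = (m0, M0) /\ forall k, I (g k) /\ R (g k) (g k.+1).
  apply: dc; first by split=> //; split=> //.
  move=> [m M'] [hi [hm hs]] /=.
  have [N [hN [hNM hd]]] := dec_list (subs (iota 0 m.+1)) hi.
  have [q [hq hNq]] := hN m.+1.
  exists (q, N); split; first by split=> //; split=> // x hx; apply: hs; apply: hNM.
  by split=> //.
have mono : forall i j, i < j -> (g i).1 < (g j).1.
  move=> i; elim=> [//|j IH] hij.
  have [_ [hlt _]] := (hg j).2.
  rewrite ltnS leq_eqVlt in hij; case/orP: hij => [/eqP ->//|/IH]; lia.
have msub : forall i j, i <= j -> sub (g j).2 (g i).2.
  move=> i; elim=> [|j IH] hij.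
    by move: hij; rewrite leqn0 => /eqP ->.
  case: (eqVneq i j.+1) => [->//|hne].
  have hij' : i <= j by lia.
  have [hs _] := (hg j).2.
  move=> x hx; apply: (IH hij'); exact: hs.
have mk : forall k, k <= (g k).1.
  elim=> [|k IH] //; have := mono k k.+1 (ltnSn k); lia.
exists (fun x => exists k, (g k).1 = x).
split.
  move=> n; exists (g n).1; split; [exact: mk | by exists n].
split.
  move=> x [k <-]; apply: hM0M; exact: (hg k).1.2.2 _ (hg k).1.2.1.
move=> s hs hsN.
case: (eqVneq s [::]) => [->|/eqP hne].
  apply: dec_sub hd0 _ => x [k <-]; exact: (hg k).1.2.2 _ (hg k).1.2.1.
have hz := last_in hne.
have [j hj] := hsN _ hz.
have hd : dec s (g j.+1).2.
  apply: (hg j).2.2.2; apply: subs_iota => // x hx.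
  have := last_max hs hx; lia.
apply: dec_tail hd => x [[k <-] hab].
have hlt : (g j).1 < (g k).1 by rewrite hj; exact: hab _ hz.
have hjk : j < k.
  case: (ltnP j k) => // hkj; rewrite leq_eqVlt in hkj.
  case/orP: hkj => [/eqP E|/mono]; [by move: hlt; rewrite E ltnn|lia].
apply: (msub j.+1 k hjk); exact: (hg k).1.2.1.
Qed.

Lemma key_e s N : rej s N -> exists b, forall n, b <= n -> N n -> above s n -> ~ acc (rcons s n) N.
Proof.
move=> hrej; apply: NNPP => H.
pose N2 := fun n => N n /\ above s n /\ acc (rcons s n) N.
have hinf : inf N2.
  move=> b; apply: NNPP => H2; apply: H; exists b => n hbn hNn habn hacc.
  by apply: H2; exists n; split=> //; split=> //; split=> //.
apply: (hrej N2 hinf (fun x h => h.1)).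
move=> Y hY hYN2 hab.
have [y0 [_ hy0]] := hY 0.
have [y [hy hymin]] := min_ex (ex_intro _ y0 hy0).
have hacc := (hYN2 y hy).2.2.
pose Y' := fun x => Y x /\ x <> y.
have hY' : inf Y'.
  move=> n; have [x [hx hYx]] := hY (maxn n y.+1); exists x; split; [lia|split=> //; lia].
have := hacc Y' hY' (fun x h => (hYN2 x h.1).1) _.
  have H3 : forall x, Y' x -> above (rcons s y) x.
    move=> x [hx hxy] z; rewrite mem_rcons inE => /orP [/eqP ->|hz].
      have := hymin x hx; lia.
    exact: hab x hx z hz.
  move=> /(_ H3).
  apply: Phi_ext => x; rewrite /U /Y' mem_rcons inE; split.
    by case => [/orP [/eqP ->|hx]|[hx _]]; [right|left|right].
  case => [hx|hx]; first by left; rewrite hx orbT.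
  case: (eqVneq x y) => [E|hne]; first by left.
  by right; split=> //; apply/eqP.
Qed.

Lemma diag2 N : inf N -> (forall s, sorted ltn s -> (forall x, x \in s -> N x) -> dec s N) ->
  rej [::] N ->
  exists N', inf N' /\ sub N' N /\ forall Y, inf Y -> sub Y N' -> forall s, P s -> ~ IS s Y.
Proof.
move=> hN hdec hrej0.
pose I := fun L : seq nat => [/\ sorted ltn L, (forall x, x \in L -> N x) &
   forall s, sorted ltn s -> {subset s <= L} -> rej s N].
pose R := fun L L' : seq nat => exists2 n, L' = rcons L n & size L <= n.
have [g [g0 hg]] : exists g, g 0 = [::] /\ forall k, I (g k) /\ R (g k) (g k.+1).
  apply: dc.
    split=> // s _ hsub; case: s hsub => [|x s] hsub //.
    by have := hsub x (mem_head _ _).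
  move=> L [hLs hLN hLr].
  have [K hK] := bound_ex L.
  have hbl : forall LL : seq (seq nat), exists b, forall s, s \in LL -> sorted ltn s ->
      {subset s <= L} -> forall n, b <= n -> N n -> above s n -> ~ acc (rcons s n) N.
    elim=> [|s LL [b1 hb1]]; first by exists 0.
    case: (classic (sorted ltn s /\ {subset s <= L})) => [[h1 h2]|hns].
      have [b2 hb2] := key_e (hLr s h1 h2).
      exists (maxn b1 b2) => t; rewrite inE => /orP [/eqP -> _ _ n hn|ht h1' h2' n hn].
        apply: hb2; lia.
      apply: (hb1 t ht h1' h2'); lia.
    exists b1 => t; rewrite inE => /orP [/eqP -> h1 h2|ht]; first by exfalso; apply: hns.
    exact: hb1.
  have [b hb] := hbl (subs (iota 0 K)).
  have [n [hn hNn]] := hN (maxn b (maxn K (size L))).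
  exists (rcons L n); split; last by exists n => //; lia.
  split.
  - apply: sorted_rcons => // x /hK; lia.
  - move=> x; rewrite mem_rcons inE => /orP [/eqP ->//|]; exact: hLN.
  - move=> s hs hsub.
    case: (boolP (n \in s)) => hns; last first.
      apply: hLr => // x hx; move: (hsub x hx); rewrite mem_rcons inE => /orP [/eqP E|//].
      by move: hns; rewrite -E hx.
    move: hs hsub hns; case/lastP: s => [//|s z] hs hsub hns.
    have [hs' hz] := sorted_rcons_inv hs.
    have hzin : z \in rcons L n by apply: hsub; rewrite mem_rcons mem_head.
    have hzn : z = n.
      move: hns; rewrite mem_rcons inE => /orP [/eqP ->//|hns].
      have := hz n hns; move: hzin.
      rewrite mem_rcons inE => /orP [/eqP -> | /hK]; lia.
    subst z.
    have hsL : {subset s <= L}.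
      move=> x hx; have : x \in rcons L n by apply: hsub; rewrite mem_rcons inE hx orbT.
      rewrite mem_rcons inE => /orP [/eqP E|//]; by have := hz x hx; lia.
    have hna : ~ acc (rcons s n) N.
      apply: (hb s _ hs' hsL n _ hNn).
      - apply: subs_iota => // x hx; have := hK x (hsL x hx); lia.
      - lia.
      - move=> x hx; have := hK x (hsL x hx); lia.
    have hdn : dec (rcons s n) N.
      apply: hdec => // x; rewrite mem_rcons inE => /orP [/eqP ->//|hx].
      exact: hLN _ (hsL x hx).
    by case: hdn.
have hsize : forall k, size (g k) = k.
  elim=> [|k IH]; first by rewrite g0.
  by have [n -> _] := (hg k).2; rewrite size_rcons IH.
have hmon : forall i j, i <= j -> {subset g i <= g j}.
  move=> i; elim=> [|j IH] hij.
    by move: hij; rewrite leqn0 => /eqP ->.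
  case: (eqVneq i j.+1) => [->//|hne].
  have hij' : i <= j by lia.
  move=> x /(IH hij'); have [n -> _] := (hg j).2; rewrite mem_rcons inE => ->; rewrite orbT.
  done.
exists (fun x => exists k, x \in g k).
split.
  move=> b; have [n E hn] := (hg b).2; exists n; split; first by rewrite -(hsize b).
  by exists b.+1; rewrite E mem_rcons mem_head.
split.
  by move=> x [k hk]; have [_ h _] := (hg k).1; exact: h.
move=> Y hY hYN s hP hIS.
have [hne [hso [hsY hdown]]] := hIS.
have [K hK] : exists K, {subset s <= g K}.
  suff H : forall t : seq nat, (forall x, x \in t -> exists k, x \in g k) ->
      exists K, {subset t <= g K}.
    by apply: H => x hx; apply: hYN; apply: hsY.
  elim=> [|a t IH] h; first by exists 0.
  have [k1 hk1] := IH (fun x hx => h x (in_cons_r _ hx)).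
  have [k2 hk2] := h a (mem_head _ _).
  exists (maxn k1 k2) => x; rewrite inE => /orP [/eqP ->|hx].
    by apply: (hmon k2); [lia|done].
  by apply: (hmon k1); [lia|exact: hk1].
have [_ _ hr] := (hg K).1.
apply: (hr s hso hK N hN (fun x h => h)).
move=> Z hZ hZN hab; exists s; split=> //; split=> //; split=> //; split.
  by move=> x hx; left.
move=> x [hx|hx] hle //; exfalso; have := hab x hx _ (last_in hne); lia.
Qed.

Lemma GP M : inf M -> exists N, inf N /\ sub N M /\
  ((forall Y, inf Y -> sub Y N -> Phi Y) \/
   (forall Y, inf Y -> sub Y N -> forall s, P s -> ~ IS s Y)).
Proof.
move=> hM; have [N [hN [hNM hd]]] := diag1 hM.
case: (hd [::] isT (fun x h => ltac:(by []))) => [hacc|hrej].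
  exists N; split=> //; split=> //; left => Y hY hYN.
  have := hacc Y hY hYN (fun y _ z hz => ltac:(by [])).
  apply: Phi_ext => x; rewrite /U in_nil; split; [by case|by right].
have [N' [h1 [h2 h3]]] := diag2 hN hd hrej.
exists N'; split=> //; split; [by move=> x hx; apply: hNM; apply: h2 | right; exact: h3].
Qed.

End GP.

Lemma bqo_part m : bqo radoLe (UAM m).
Proof.
move=> B [hfin [hinfam [hanti hbar]]] f hf.
pose Cov := fun x => exists s, B s /\ x \in s.
have hCov : inf Cov.
  move=> n; apply: NNPP => H.
  have hb : forall s, B s -> s \in subs (iota 0 n).
    move=> s hs; apply: subs_iota; first exact: hfin s hs.
    move=> x hx; rewrite add0n leq0n /=; case: (ltnP x n) => // hxn; exfalso.
    by apply: H; exists x; split=> //; exists s; split.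
  have [s [hs hns]] := hinfam (subs (iota 0 n)); by rewrite (hb s hs) in hns.
pose Pc := fun c s => B s /\ (f s).1 = c.
have huniq : forall Y s t, B s -> B t -> IS s Y -> IS t Y -> s = t.
  move=> Y s t hs ht [hs1 [hs2 [hs3 hs4]]] [ht1 [ht2 [ht3 ht4]]].
  case: (leqP (last 0 s) (last 0 t)) => hl.
    apply: hanti => // x hx; apply: ht4; [exact: hs3|have := last_max hs2 hx; lia].
  apply/esym; apply: hanti => // x hx; apply: hs4; [exact: ht3|have := last_max ht2 hx; lia].
have hit : forall k, exists N, inf N /\ sub N Cov /\
   ((exists2 c, c < k & forall Y, inf Y -> sub Y N -> Phi (Pc c) Y) \/
    (forall c, c < k -> forall Y, inf Y -> sub Y N -> forall s, Pc c s -> ~ IS s Y)).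
  elim=> [|k [N [hN [hNC [[c hc hall]|hnone]]]]].
  - by exists Cov; split=> //; split=> //; right.
  - exists N; split=> //; split=> //; left; exists c => //; lia.
  - have [N' [h1 [h2 [h3|h3]]]] := GP (Pc k) hN.
      exists N'; split=> //; split; first by move=> x hx; apply: hNC; apply: h2.
      by left; exists k.
    exists N'; split=> //; split; first by move=> x hx; apply: hNC; apply: h2.
    right => c hc; rewrite ltnS leq_eqVlt in hc; case/orP: hc => [/eqP -> | hc]; first exact: h3.
    move=> Y hY hYN; apply: hnone => // x hx; apply: h2; exact: hYN.
have [N [hN [hNC [[c hc hall]|hnone]]]] := hit m; last first.
  have [s [hs hIS]] := hbar N hN (fun x hx => hNC x hx).
  by exfalso; apply: (hnone (f s).1 (uam_bound (hf s hs)) N hN (fun x h => h) s _ hIS).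
have hcol : forall Y s, inf Y -> sub Y N -> B s -> IS s Y -> (f s).1 = c.
  move=> Y s hY hYN hs hIS; have [t [[ht htc] hIt]] := hall Y hY hYN.
  by rewrite (huniq Y s t hs ht hIS hIt).
suff H : forall v Y s, inf Y -> sub Y N -> B s -> IS s Y -> (f s).2 = v -> good radoLe B f.
  have [s [hs hIS]] := hbar N hN hNC.
  exact: H _ N s hN (fun x h => h) hs hIS erefl.
elim/ltn_ind => v IH Y s hY hYN hs hIS hv.
have [y0 [_ hy0]] := hY 0.
have [y [hy hymin]] := min_ex (ex_intro _ y0 hy0).
pose Y' := fun x => Y x /\ x <> y.
have hY' : inf Y'.
  move=> n; have [x [hx hYx]] := hY (maxn n y.+1); exists x; split; [lia|split=> //; lia].
have hY'N : sub Y' N := fun x h => hYN x h.1.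
have [t [ht hIt]] := hbar Y' hY' (fun x h => hNC x (hY'N x h)).
have [hs1 [hs2 [hs3 hs4]]] := hIS.
have [ht1 [ht2 [ht3 ht4]]] := hIt.
have hys : y \in s.
  by apply: hs4 => //; apply: hymin; apply: hs3; apply: last_in.
have hT : ~ {subset t <= s}.
  move=> hts; have E := hanti t s ht hs hts; rewrite -E in hys.
  by have [_ ] := ht3 y hys.
have hr : sorted ltn (y :: t).
  rewrite /= path_ltnE ht2 andbT; apply/allP => x hx /=.
  have [hx1 hx2] := ht3 x hx; have := hymin x hx1; lia.
have hrY : forall x, x \in y :: t -> Y x.
  by move=> x; rewrite inE => /orP [/eqP ->|/ht3 []].
have hlast : last 0 s <= last y t.
  case: (leqP (last 0 s) (last y t)) => // hgt; exfalso; apply: hT => x hx.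
  apply: hs4; first by apply: hrY; apply: in_cons_r.
  have := path_last_max hr (in_cons_r _ hx); lia.
have hlt0 : last y t = last 0 t.
  by move: ht1; case: (t).
have hsr : {subset s <= y :: t}.
  move=> x hx; case: (eqVneq x y) => [->|hxy]; first exact: mem_head.
  apply: in_cons_r; apply: ht4; first by split; [exact: hs3|exact/eqP].
  rewrite -hlt0; have := last_max hs2 hx; lia.
have hpre : s = take (size s) (y :: t).
  apply: prefix_take => // x hx [z [hz hxz]]; apply: hs4; first exact: hrY.
  have := last_max hs2 hz; lia.
have hk : size s < size (y :: t).
  rewrite ltnNge; apply/negP => hge; apply: hT => x hx.
  by rewrite hpre take_oversize //; exact: in_cons_r.
have htri : tri s t.
  exists (y :: t); split; first exact: hr.
  by split=> //; exists (size s); split.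
have hcs := hcol Y s hY hYN hs hIS.
have hct := hcol Y' t hY' hY'N ht hIt.
case: (leqP (f s).2 (f t).2) => hle.
  exists s, t; split=> //; split=> //; split=> //; left; split=> //; by rewrite hcs hct.
by apply: (IH (f t).2 _ Y' t hY' hY'N ht hIt erefl); rewrite -hv.
Qed.

Theorem lemma6p5 :
  (forall m : nat, bqo radoLe (UAM m)) /\
  (exists e : nat * nat -> pset,
     (forall x, radoV x -> max_antichain (e x)) /\
     (forall x y, radoV x -> radoV y -> (radoLe x y <-> dominated (e x) (e y)))).
Proof.
split; first exact: bqo_part.
exists emb; split; [exact: emb_max | exact: emb_dom].
Qed.
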